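(* Let $I=\{1,\dots,\ell\}$, $J=\{\ell+1,\dots,p\}$, let $h_1,\dots,h_p\colon\mathbb R^n\times\mathbb R^m\to\overline{\mathbb R}$ and $\Gamma(x):=\{y\in\mathbb R^m\mid h_i(x,y)\le0\ (i\in I),\ h_i(x,y)=0\ (i\in J)\}$. Fix $\bar x\in\operatorname{dom}\Gamma$ and $\bar y\in\Gamma(\bar x)$. Assume that $h_1,\dots,h_p$ are continuous and continuously differentiable with respect to $y$ in a neighborhood of $\{\bar x\}\times\Gamma(\bar x)$, that $h_i(x,\cdot)\colon\mathbb R^m\to\mathbb R$ is continuous for every $x\in\operatorname{dom}\Gamma$ and every $i$, and assume (A1): for each $x\in\mathbb R^n$, $h_i(x,\cdot)$ is convex for $i\in I$ and affine for $i\in J$; and (A2): $\Gamma$ is locally bounded at $\bar x$. Then the following are equivalent: (a) $\Gamma$ is R-regular at $(\bar x,\bar y)$ with respect to $\operatorname{dom}\Gamma$; (b) there is a constant $M>0$ such that for all sequences $\{x^k\}\subset\operatorname{dom}\Gamma$, $\{\nu^k\}\subset\mathbb R^m$, $\{y^k\}\subset\mathbb R^m$ with $x^k\to\bar x$, $\nu^k\to\bar y$, $\nu^k\notin\Gamma(x^k)$ and $y^k\in\Pi(\nu^k,\Gamma(x^k))$ for all $k$, the set $\Lambda^M_{\nu^k}(x^k,y^k)$ is nonempty for all sufficiently large $k$.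
   Context: $\operatorname{dom}\Gamma:=\{x\mid\Gamma(x)\ne\emptyset\}$; $\|\cdot\|$ Euclidean norm; $\operatorname{dist}(\nu,A):=\inf_{z\in A}\|z-\nu\|$; $\Pi(\nu,A):=\operatorname{argmin}\{\|z-\nu\|\mid z\in A\}$. $\Gamma$ is locally bounded at $\bar x$ if there are a bounded set $B$ and a neighborhood $V$ of $\bar x$ with $\Gamma(x)\subset B$ for all $x\in V$. $\Gamma$ is R-regular at $(\bar x,\bar y)$ with respect to $\Omega$ if there exist $\kappa>0$ and a neighborhood $U$ of $(\bar x,\bar y)$ such that $\operatorname{dist}(y,\Gamma(x))\le\kappa\max\{0,\max_{i\in I}h_i(x,y),\max_{i\in J}|h_i(x,y)|\}$ for all $(x,y)\in U\cap(\Omega\times\mathbb R^m)$. For $x\in\operatorname{dom}\Gamma$, $\nu\notin\Gamma(x)$, $y\in\Pi(\nu,\Gamma(x))$, $M>0$: $\Lambda_\nu(x,y):=\{\lambda\in\mathbb R^p\mid \frac{y-\nu}{\|y-\nu\|}+\sum_{i=1}^p\lambda_i\nabla_yh_i(x,y)=0,\ \lambda_i\ge0,\ \lambda_ih_i(x,y)=0\ \forall i\in I\}$ and $\Lambda^M_\nu(x,y):=\{\lambda\in\Lambda_\nu(x,y)\mid\sum_{i=1}^p|\lambda_i|\le M\}$. *)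

(* Defs.v *)
From HB Require Import structures.
From mathcomp Require Import all_boot all_order all_algebra.
From mathcomp Require Import all_classical all_reals all_analysis.
Set Implicit Arguments. Unset Strict Implicit. Unset Printing Implicit Defensive.
Import Order.TTheory GRing.Theory Num.Theory.
Import numFieldNormedType.Exports.
Local Open Scope classical_set_scope.
Local Open Scope ring_scope.

Section Defs.
Variable R : realType.

Definition enorm (k : nat) (v : 'rV[R]_k) : R :=
  Num.sqrt (\sum_(j < k) v 0 j ^+ 2).

Definition edot (k : nat) (u v : 'rV[R]_k) : R := \sum_(j < k) u 0 j * v 0 j.

Definition edist (k : nat) (v : 'rV[R]_k) (A : set 'rV[R]_k) : R :=
  inf [set enorm (z - v) | z in A].

Definition eproj (k : nat) (v : 'rV[R]_k) (A : set 'rV[R]_k) : set 'rV[R]_k :=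
  [set y | A y /\ forall z, A z -> enorm (y - v) <= enorm (z - v)].

Variables (n m p l : nat).
(* indices: I = {i < l} (the paper's 1..l), J = {l <= i < p} (the paper's l+1..p) *)
Variable h : 'I_p -> 'rV[R]_n -> 'rV[R]_m -> \bar R.

Definition Gamma (x : 'rV[R]_n) : set 'rV[R]_m :=
  [set y | (forall i : 'I_p, (i < l)%N -> (h i x y <= 0)%E) /\
           (forall i : 'I_p, (l <= i)%N -> h i x y = 0%E)].

Definition domG : set 'rV[R]_n := [set x | Gamma x !=set0].

Definition grad_y (i : 'I_p) (x : 'rV[R]_n) (y : 'rV[R]_m) : 'rV[R]_m :=
  \row_(j < m) ('d (fun y' => fine (h i x y')) y) (delta_mx 0 j).

Definition Lambda (nu : 'rV[R]_m) (x : 'rV[R]_n) (y : 'rV[R]_m) : set 'rV[R]_p :=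
  [set lam | (enorm (y - nu))^-1 *: (y - nu)
                + \sum_(i < p) lam 0 i *: grad_y i x y = 0 /\
             (forall i : 'I_p, (i < l)%N -> 0 <= lam 0 i /\ ((lam 0 i)%:E * h i x y = 0)%E)].

Definition LambdaM (M : R) (nu : 'rV[R]_m) (x : 'rV[R]_n) (y : 'rV[R]_m) : set 'rV[R]_p :=
  [set lam | Lambda nu x y lam /\ \sum_(i < p) `|lam 0 i| <= M].

Definition resid (x : 'rV[R]_n) (y : 'rV[R]_m) : \bar R :=
  \big[maxe/0%E]_(i < p) (if (i < l)%N then h i x y else `|h i x y|)%E.

Definition Rregular (Omega : set 'rV[R]_n) (xb : 'rV[R]_n) (yb : 'rV[R]_m) : Prop :=
  exists kappa : R, 0 < kappa /\
  exists U : set ('rV[R]_n * 'rV[R]_m), nbhs (xb, yb) U /\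
  forall x y, U (x, y) -> Omega x ->
    ((edist y (Gamma x))%:E <= kappa%:E * resid x y)%E.

Definition loc_bounded (xb : 'rV[R]_n) : Prop :=
  exists B : set 'rV[R]_m, (exists r : R, forall y, B y -> enorm y <= r) /\
  exists V : set 'rV[R]_n, nbhs xb V /\ forall x, V x -> Gamma x `<=` B.

End Defs.

(* convexity of an extended-real-valued function (convex epigraph) *)
Definition econvex (R : realType) (k : nat) (f : 'rV[R]_k -> \bar R) : Prop :=
  forall (y z : 'rV[R]_k) (a b t : R), 0 <= t <= 1 ->
    (f y <= a%:E)%E -> (f z <= b%:E)%E ->
    (f (t *: y + (1 - t) *: z)%R <= (t * a + (1 - t) * b)%R%:E)%E.

Definition eaffine (R : realType) (k : nat) (f : 'rV[R]_k -> \bar R) : Prop :=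
  exists (a : 'rV[R]_k) (b : R), forall y, f y = (edot a y + b)%:E.

(* Main.v *)
Require Import Defs.
From HB Require Import structures.
From mathcomp Require Import all_boot all_order all_algebra.
From mathcomp Require Import all_classical all_reals all_analysis.
From mathcomp Require Import ring lra.
Import Order.TTheory GRing.Theory Num.Theory.
Import numFieldNormedType.Exports.
Local Open Scope classical_set_scope.
Local Open Scope ring_scope.
Set Implicit Arguments. Unset Strict Implicit. Unset Printing Implicit Defensive.
Section Prelim.
Variable R : realType.
Implicit Types (k : nat).

Lemma edotC k (u v : 'rV[R]_k) : edot u v = edot v u.
Proof. by apply: eq_bigr => j _; rewrite mulrC. Qed.

Lemma edotDr k (u v w : 'rV[R]_k) : edot u (v + w) = edot u v + edot u w.
Proof. by rewrite /edot -big_split; apply: eq_bigr => j _; rewrite mxE mulrDr. Qed.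

Lemma edotZr k (u v : 'rV[R]_k) a : edot u (a *: v) = a * edot u v.
Proof. by rewrite /edot mulr_sumr; apply: eq_bigr => j _; rewrite mxE mulrCA. Qed.

Lemma edot0r k (u : 'rV[R]_k) : edot u 0 = 0.
Proof. by rewrite /edot big1 // => j _; rewrite mxE mulr0. Qed.

Lemma edotNr k (u v : 'rV[R]_k) : edot u (- v) = - edot u v.
Proof. by rewrite -scaleN1r edotZr mulN1r. Qed.

Lemma edotBr k (u v w : 'rV[R]_k) : edot u (v - w) = edot u v - edot u w.
Proof. by rewrite edotDr edotNr. Qed.

Lemma edotDl k (u v w : 'rV[R]_k) : edot (v + w) u = edot v u + edot w u.
Proof. by rewrite edotC edotDr !(edotC u). Qed.

Lemma edotZl k (u v : 'rV[R]_k) a : edot (a *: v) u = a * edot v u.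
Proof. by rewrite edotC edotZr edotC. Qed.

Lemma edotNl k (u v : 'rV[R]_k) : edot (- v) u = - edot v u.
Proof. by rewrite edotC edotNr edotC. Qed.

Lemma edotBl k (u v w : 'rV[R]_k) : edot (v - w) u = edot v u - edot w u.
Proof. by rewrite edotDl edotNl. Qed.

Lemma edot0l k (u : 'rV[R]_k) : edot 0 u = 0.
Proof. by rewrite edotC edot0r. Qed.

Lemma edot_sumr k (I : Type) (r : seq I) (P : pred I) (u : 'rV[R]_k) F :
  edot u (\sum_(i <- r | P i) F i) = \sum_(i <- r | P i) edot u (F i).
Proof. exact: (big_morph _ (edotDr u) (edot0r u)). Qed.

Lemma edot_suml k (I : Type) (r : seq I) (P : pred I) (u : 'rV[R]_k) F :
  edot (\sum_(i <- r | P i) F i) u = \sum_(i <- r | P i) edot (F i) u.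
Proof. rewrite edotC edot_sumr; apply: eq_bigr => i _; exact: edotC. Qed.

Lemma edot_ge0 k (v : 'rV[R]_k) : 0 <= edot v v.
Proof. by apply: sumr_ge0 => j _; rewrite -expr2 sqr_ge0. Qed.

Lemma edot_eq0 k (v : 'rV[R]_k) : edot v v = 0 -> v = 0.
Proof.
move=> /eqP; rewrite psumr_eq0; last by move=> j _; rewrite -expr2 sqr_ge0.
move=> /allP H; apply/rowP => j; rewrite mxE.
have := H j (mem_index_enum j); rewrite /= mulf_eq0 orbb => /eqP //.
Qed.

Lemma enorm_ge0 k (v : 'rV[R]_k) : 0 <= enorm v.
Proof. exact: sqrtr_ge0. Qed.

Lemma enorm_sqr k (v : 'rV[R]_k) : enorm v ^+ 2 = edot v v.
Proof.
rewrite /enorm sqr_sqrtr; last by apply: sumr_ge0 => j _; rewrite sqr_ge0.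
by apply: eq_bigr => j _; rewrite expr2.
Qed.

Lemma enorm_sqrtE k (v : 'rV[R]_k) : enorm v = Num.sqrt (edot v v).
Proof. by rewrite -enorm_sqr sqrtr_sqr ger0_norm // enorm_ge0. Qed.

Lemma enormN k (v : 'rV[R]_k) : enorm (- v) = enorm v.
Proof. by rewrite !enorm_sqrtE edotNl edotNr opprK. Qed.

Lemma enormB k (u v : 'rV[R]_k) : enorm (u - v) = enorm (v - u).
Proof. by rewrite -enormN opprB. Qed.

Lemma enormZ k (v : 'rV[R]_k) a : enorm (a *: v) = `|a| * enorm v.
Proof.
rewrite !enorm_sqrtE edotZl edotZr mulrA -expr2 sqrtrM ?sqr_ge0 //.
by rewrite sqrtr_sqr.
Qed.

Lemma enorm_eq0 k (v : 'rV[R]_k) : enorm v = 0 -> v = 0.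
Proof. by move=> H; apply: edot_eq0; rewrite -enorm_sqr H expr2 mulr0. Qed.

Lemma enorm_le k (u v : 'rV[R]_k) : enorm u <= enorm v -> edot u u <= edot v v.
Proof.
move=> H; rewrite -!enorm_sqr.
have := enorm_ge0 u; nra.
Qed.

Lemma edot_unit_le k (v a : 'rV[R]_k) : enorm v = 1 -> edot v a <= enorm a.
Proof.
move=> v1; set c := edot v a.
have H := edot_ge0 (a - c *: v).
have E : edot (a - c *: v) (a - c *: v) = enorm a ^+ 2 - c ^+ 2.
  rewrite edotBl !edotBr !edotZl !edotZr -!enorm_sqr v1 (edotC a v) -/c.
  by rewrite expr1n; ring.
have := enorm_ge0 a; rewrite E in H; nra.
Qed.

Lemma enorm_row_le k (v : 'rV[R]_k) (j : 'I_k) : `|v 0 j| <= enorm v.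
Proof.
rewrite -(sqrtr_sqr (v 0 j)) /enorm; apply: ler_wsqrtr.
rewrite (bigD1 j) //= lerDl; apply: sumr_ge0 => i _; exact: sqr_ge0.
Qed.

Lemma mxnorm_le_enorm k (v : 'rV[R]_k) : `|v| <= enorm v.
Proof.
have -> : `|v| = mx_norm v by [].
rewrite mx_normrE; apply: bigmax_le => [|[i j] _] /=.
  exact: enorm_ge0.
by rewrite (ord1 i); exact: enorm_row_le.
Qed.


Lemma edot_expand k (a b : 'rV[R]_k) (s : R) :
  edot (a + s *: b) (a + s *: b) = edot a a + 2 * s * edot a b + s ^+ 2 * edot b b.
Proof. rewrite edotDl !edotDr !edotZl !edotZr (edotC b a); ring. Qed.

Lemma near_vi k (S : set 'rV[R]_k) (v y : 'rV[R]_k) : S y ->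
  (forall a b (t : R), 0 <= t <= 1 -> S a -> S b -> S (t *: a + (1 - t) *: b)) ->
  (forall z, S z -> edot (y - v) (y - v) <= edot (z - v) (z - v)) ->
  forall w, S w -> edot (v - y) (w - y) <= 0.
Proof.
move=> Sy cS mS w Sw.
set A := edot (y - v) (w - y); set B := edot (w - y) (w - y).
have B0 : 0 <= B := edot_ge0 _.
have key : forall s : R, 0 < s <= 1 -> 0 <= 2 * A + s * B.
  move=> s /andP [s0 s1].
  have := mS _ (cS w y s (introT andP (conj (ltW s0) s1)) Sw Sy).
  have -> : s *: w + (1 - s) *: y - v = (y - v) + s *: (w - y).
    by apply/rowP => j; rewrite !mxE; ring.
  rewrite edot_expand -/A -/B => H.
  have : 0 <= s * (2 * A + s * B) by nra.
  by rewrite pmulr_rge0.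
rewrite -opprB edotNl oppr_le0 -/A.
rewrite leNgt; apply/negP => A0.
set s := - A / (B - A + 1).
have d0 : 0 < B - A + 1 by lra.
have sd : s * (B - A + 1) = - A by rewrite /s mulfVK // gt_eqF.
have s0 : 0 < s by rewrite /s divr_gt0 // oppr_gt0.
have s1 : s <= 1 by rewrite /s ler_pdivrMr // mul1r; lra.
have := key s (introT andP (conj s0 s1)).
nra.
Qed.

Lemma cont_sum (T : topologicalType) q (F : 'I_q -> T -> R) :
  (forall i, continuous (F i)) -> continuous (fun w => \sum_(i < q) F i w).
Proof.
elim: q F => [|q IH] F H.
  have -> : (fun w => \sum_(i < 0) F i w) = cst 0.
    by rewrite funeqE => w; rewrite big_ord0.
  exact: cst_continuous.
have -> : (fun w => \sum_(i < q.+1) F i w) =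
    (fun w => \sum_(i < q) F (widen_ord (leqnSn q) i) w + F ord_max w).
  by rewrite funeqE => w; rewrite big_ord_recr.
move=> x; apply: cvgD; last exact: H.
by apply: IH => i; exact: H.
Qed.

Lemma cont_subc (T : topologicalType) (f : T -> R) c :
  continuous f -> continuous (fun w => f w - c).
Proof. move=> cf x; apply: cvgB; [exact: cf | exact: cvg_cst]. Qed.

Lemma cont_mulc (T : topologicalType) (f : T -> R) c :
  continuous f -> continuous (fun w => f w * c).
Proof. move=> cf x; apply: cvgM; [exact: cf | exact: cvg_cst]. Qed.

Lemma cont_edot k (T : topologicalType) (f g : T -> 'rV[R]_k) :
  (forall j, continuous (fun w => f w 0 j)) -> (forall j, continuous (fun w => g w 0 j)) ->
  continuous (fun w => edot (f w) (g w)).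
Proof.
move=> cf cg; apply: cont_sum => j x; apply: cvgM; [exact: cf | exact: cg].
Qed.

Lemma edist_le k (v w : 'rV[R]_k) (A : set 'rV[R]_k) : A w -> Defs.edist v A <= enorm (w - v).
Proof.
move=> Aw; rewrite /Defs.edist.
have H := @ge_inf _ [set enorm (z - v) | z in A].
apply: H; last by exists w.
by exists 0 => _ [z _ <-]; exact: enorm_ge0.
Qed.

Lemma edist_ge k (v : 'rV[R]_k) (A : set 'rV[R]_k) c : A !=set0 ->
  (forall w, A w -> c <= enorm (w - v)) -> c <= Defs.edist v A.
Proof.
move=> [w Aw] H; apply: lb_le_inf; first by exists (enorm (w - v)), w.
by move=> _ [z Az <-]; exact: H.
Qed.

End Prelim.
Section Calc.
Variable R : realType.
Variable k : nat.
Implicit Types (f : 'rV[R]_k -> R) (y w z : 'rV[R]_k).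

Lemma d_junk f y w : ~ differentiable f y -> 'd f y w = 0.
Proof.
move=> ND; rewrite /diff getPN //= => df Pdf; apply: ND.
apply/diffP; rewrite /diff.
match goal with |- context[get ?P] =>
  have ex : exists x, P x by exists df end.
exact: (getPex ex).
Qed.

Lemma grad_dot f y w :
  edot (\row_(j < k) ('d f y) (delta_mx 0 j)) w = 'd f y w.
Proof.
rewrite {2}(row_sum_delta w) linear_sum /edot; apply: eq_bigr => j _.
by rewrite mxE linearZ /= mulrC.
Qed.

Lemma dir_cvg f y w : differentiable f y ->
  (fun t : R => t^-1 * (f (y + t *: w) - f y)) @ 0^'+ --> 'd f y w.
Proof.
move=> df; rewrite -deriveE //.
have dv : derivable f y w := diff_derivable df.
apply: cvg_dnbhs_at_right.
have -> : (fun t : R => t^-1 * (f (y + t *: w) - f y)) =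
  (fun h => h^-1 *: ((f \o shift y) (h *: w) - f y)).
  by rewrite funeqE => t /=; rewrite [t *: w + y]addrC.
exact: dv.
Qed.

Lemma conv_grad f y z :
  (forall a b (t : R), 0 <= t <= 1 -> f (t *: a + (1 - t) *: b) <= t * f a + (1 - t) * f b) ->
  differentiable f y -> 'd f y (z - y) <= f z - f y.
Proof.
move=> cf df; rewrite leNgt; apply/negP => lt.
have H1 := @cvgr_gt _ _ _ (at_right_proper_filter 0) _ _ (dir_cvg (w:=z - y) df) _ lt.
have H2 : \forall t \near 0^'+, t^-1 * (f (y + t *: (z - y)) - f y) <= f z - f y.
  near=> t.
  have t0 : 0 < t by near: t; exact: nbhs_right_gt.
  have t1 : t <= 1 by near: t; apply: nbhs_right_ltW; exact: ltr01.
  rewrite ler_pdivrMl //.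
  have -> : y + t *: (z - y) = t *: z + (1 - t) *: y.
    by apply/rowP => j; rewrite !mxE; ring.
  have := cf z y t; rewrite t1 ltW //= => /(_ isT) H.
  move: H; lra.
have [t [Ht1 Ht2]] := filter_ex (filterI H1 H2).
by move: Ht1; rewrite ltNge Ht2.
Unshelve. all: by end_near.
Qed.

Lemma upper_near f y w c : differentiable f y -> 'd f y w < c ->
  \forall t \near 0^'+, f (y + t *: w) <= f y + t * c.
Proof.
move=> df lt.
have H1 := @cvgr_lt _ _ _ (at_right_proper_filter 0) _ _ (dir_cvg (w:=w) df) _ lt.
near=> t.
have t0 : 0 < t by near: t; exact: nbhs_right_gt.
have : t^-1 * (f (y + t *: w) - f y) < c by near: t; exact: H1.
rewrite ltr_pdivrMl // => H; rewrite -lerBlDl; exact: ltW.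
Unshelve. all: by end_near.
Qed.

Lemma lower_near f y w c : differentiable f y -> c < 'd f y w ->
  \forall t \near 0^'+, f y + t * c <= f (y + t *: w).
Proof.
move=> df lt.
have H1 := @cvgr_gt _ _ _ (at_right_proper_filter 0) _ _ (dir_cvg (w:=w) df) _ lt.
near=> t.
have t0 : 0 < t by near: t; exact: nbhs_right_gt.
have : c < t^-1 * (f (y + t *: w) - f y) by near: t; exact: H1.
rewrite ltr_pdivlMl // => H; rewrite -lerBrDl; exact: ltW.
Unshelve. all: by end_near.
Qed.

End Calc.
Section Main.
Variables (R : realType) (n m p l : nat).
Variable h : 'I_p -> 'rV[R]_n -> 'rV[R]_m -> \bar R.
Implicit Types (i : 'I_p) (x : 'rV[R]_n) (a b y z nu : 'rV[R]_m).

Definition hr (i : 'I_p) (x : 'rV[R]_n) (y : 'rV[R]_m) : R := fine (h i x y).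

Definition piece (i : 'I_p) x y : R := if (i < l)%N then hr i x y else `|hr i x y|.

Definition Rres (x : 'rV[R]_n) (y : 'rV[R]_m) : R := \big[Num.max/0]_(i < p) piece i x y.

Definition finx x := forall i y, h i x y \is a fin_num.

Lemma hrE x (fx : finx x) i y : h i x y = (hr i x y)%:E.
Proof. by rewrite /hr fineK. Qed.

Lemma resid_E x (fx : finx x) y : resid l h x y = (Rres x y)%:E.
Proof.
rewrite /resid /Rres (big_morph _ (@EFin_max R) (erefl (0%:E))).
apply: eq_bigr => i _; rewrite /piece hrE //.
by case: ifP.
Qed.

Lemma Rres_ge0 x y : 0 <= Rres x y.
Proof.
rewrite /Rres; elim/big_rec: _ => // i v _ Hv.
by rewrite le_max Hv orbT.
Qed.

Lemma piece_le i x y : piece i x y <= Rres x y.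
Proof. exact: le_bigmax. Qed.

Lemma Rres_le x y c : 0 <= c -> (forall i, piece i x y <= c) -> Rres x y <= c.
Proof. by move=> c0 H; apply: bigmax_le. Qed.

Lemma GammaE x (fx : finx x) y : Gamma l h x y <->
  (forall i : 'I_p, (i < l)%N -> hr i x y <= 0) /\
  (forall i : 'I_p, (l <= i)%N -> hr i x y = 0).
Proof.
split=> [[H1 H2]|[H1 H2]]; split=> i Hi.
- by have := H1 i Hi; rewrite hrE // lee_fin.
- by have := H2 i Hi; rewrite hrE // => -[].
- by rewrite hrE // lee_fin H1.
- by rewrite hrE // H2.
Qed.

Definition A1x x := forall i : 'I_p,
  ((i < l)%N -> econvex (h i x)) /\ ((l <= i)%N -> eaffine (h i x)).

Lemma conv_I x (fx : finx x) (ax : A1x x) i : (i < l)%N ->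
  forall a b (t : R), 0 <= t <= 1 ->
  hr i x (t *: a + (1 - t) *: b) <= t * hr i x a + (1 - t) * hr i x b.
Proof.
move=> il a b t t01; have [cv _] := ax i; have := cv il a b (hr i x a) (hr i x b) t t01.
by rewrite -!hrE // => /(_ (lexx _) (lexx _)); rewrite hrE // lee_fin.
Qed.

Lemma aff_J x (fx : finx x) (ax : A1x x) i : (l <= i)%N ->
  exists (A : 'rV[R]_m) (B : R), forall y, hr i x y = edot A y + B.
Proof.
move=> li; have [_ af] := ax i; have [A [B HB]] := af li.
by exists A, B => y; rewrite /hr HB.
Qed.

Lemma Gamma_convex x (fx : finx x) (ax : A1x x) a b (t : R) : 0 <= t <= 1 ->
  Gamma l h x a -> Gamma l h x b -> Gamma l h x (t *: a + (1 - t) *: b).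
Proof.
move=> t01 /(GammaE fx) [Ha1 Ha2] /(GammaE fx) [Hb1 Hb2]; apply/(GammaE fx); split=> i Hi.
- apply: (le_trans (conv_I fx ax Hi a b t01)).
  have := Ha1 i Hi; have := Hb1 i Hi; move: t01 => /andP [t0 t1] ha hb.
  nra.
- have [A [B HAB]] := aff_J fx ax Hi.
  have := Ha2 i Hi; have := Hb2 i Hi; rewrite !HAB edotDr !edotZr.
  move=> hb ha.
  have -> : edot A a = - B by lra.
  have -> : edot A b = - B by lra.
  ring.
Qed.

Lemma d_le_I x (fx : finx x) (ax : A1x x) i y z : (i < l)%N ->
  differentiable (hr i x) y -> 'd (hr i x) y (z - y) <= hr i x z - hr i x y.
Proof. move=> il; apply: conv_grad; exact: conv_I. Qed.

Lemma d_eq_J x (fx : finx x) (ax : A1x x) i y z : (l <= i)%N ->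
  differentiable (hr i x) y -> 'd (hr i x) y (z - y) = hr i x z - hr i x y.
Proof.
move=> li df; have [A [B HAB]] := aff_J fx ax li.
have cv : forall a b (t : R), 0 <= t <= 1 ->
    hr i x (t *: a + (1 - t) *: b) <= t * hr i x a + (1 - t) * hr i x b.
  by move=> a b t _; rewrite !HAB edotDr !edotZr; nra.
apply/eqP; rewrite eq_le (conv_grad z cv df) /=.
have := conv_grad (y - (z - y)) cv df.
rewrite [y - (z - y) - y]addrC addKr linearN /= !HAB !edotBr; lra.
Qed.


Lemma grad_dotE i x y w : edot (grad_y h i x y) w = 'd (hr i x) y w.
Proof. exact: grad_dot. Qed.

Lemma key_ba x (fx : finx x) (ax : A1x x) nu y lam M :
  ~ Gamma l h x nu -> eproj nu (Gamma l h x) y -> LambdaM l h M nu x y lam ->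
  enorm (y - nu) <= M * Rres x nu.
Proof.
move=> nG [yG _] [[L Lsgn] LM].
have yn : y != nu by apply/eqP => E; apply: nG; rewrite -E.
have e0 : 0 < enorm (y - nu).
  rewrite lt0r enorm_ge0 andbT; apply/eqP => /enorm_eq0/eqP; rewrite subr_eq0.
  exact/negP.
set e := enorm (y - nu) in e0 L *.
have E : e = \sum_(i < p) lam 0 i * 'd (hr i x) y (nu - y).
  have := congr1 (fun v => edot v (nu - y)) L.
  rewrite edot0l edotDl edotZl edot_suml.
  have -> : edot (y - nu) (nu - y) = - e ^+ 2.
    by rewrite -[nu - y]opprB edotNr enorm_sqr.
  under eq_bigr => i _ do rewrite edotZl grad_dotE.
  rewrite mulrN expr2 mulrA mulVf ?gt_eqF // mul1r.
  by move/eqP; rewrite addrC addr_eq0 opprK => /eqP.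
rewrite E; apply: (le_trans (y := \sum_(i < p) `|lam 0 i| * Rres x nu)).
  apply: ler_sum => i _.
  have [df|ndf] := pselect (differentiable (hr i x) y); last first.
    by rewrite d_junk // mulr0 mulr_ge0 // Rres_ge0.
  have [il|li] := ltnP i l.
  - have [lam0 lamh] := Lsgn i il.
    have [->|lamn0] := eqVneq (lam 0 i) 0; first by rewrite !mul0r normr0 mul0r.
    have hy0 : hr i x y = 0.
      move: lamh; rewrite hrE // -EFinM => -[] /eqP; rewrite mulf_eq0.
      by rewrite (negbTE lamn0) => /eqP.
    rewrite ger0_norm //; apply: ler_wpM2l => //.
    apply: (le_trans (d_le_I fx ax nu il df)); rewrite hy0 subr0.
    by have := piece_le i x nu; rewrite /piece il.
  - rewrite (d_eq_J fx ax nu li df).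
    have [_ H2] := (GammaE fx y).1 yG; rewrite H2 // subr0.
    apply: (le_trans (ler_norm _)); rewrite normrM; apply: ler_wpM2l => //.
    have := piece_le i x nu; rewrite /piece; case: ltnP => //.
    by rewrite ltnNge li.
rewrite -mulr_suml; apply: ler_wpM2r => //; exact: Rres_ge0.
Qed.

Lemma Gamma_closed x (fx : finx x) (cx : forall i, continuous (hr i x)) :
  closed (Gamma l h x).
Proof.
have -> : Gamma l h x = \bigcap_(i in [set: 'I_p]) (if (i < l)%N
    then hr i x @^-1` [set v | v <= 0] else hr i x @^-1` [set v | v = 0]).
  apply/seteqP; split => y.
    move/(GammaE fx) => [H1 H2] i _; case: ltnP => Hi /=; [exact: H1|exact: H2].
  move=> H; apply/(GammaE fx); split=> i Hi; have := H i I.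
    by rewrite Hi.
  by rewrite ltnNge Hi.
apply: closed_bigI => i _; case: ifP => _.
  apply: (continuous_closedP (hr i x)).1 (cx i) _ _. exact: closed_le.
apply: (continuous_closedP (hr i x)).1 (cx i) _ _; exact: closed_eq.
Qed.

Lemma cont_sqd (nu : 'rV[R]_m) : continuous (fun w : 'rV[R]_m => edot (w - nu) (w - nu)).
Proof.
have cj : forall j : 'I_m, continuous (fun w : 'rV[R]_m => (w - nu) 0 j).
  move=> j x.
  apply: (continuous_comp (f := fun w : 'rV[R]_m => w - nu) (g := fun M : 'rV[R]_m => M 0 j)).
    have H : {for x, continuous ((id : 'rV[R]_m -> 'rV[R]_m) - cst nu)}.
      apply: continuousB; [exact: cvg_id | exact: cst_continuous].
    exact H.
  exact: (@coord_continuous R 1 m 0 j).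
exact: cont_edot.
Qed.

Lemma proj_ex x (fx : finx x) (cx : forall i, continuous (hr i x))
  (ne : Gamma l h x !=set0) nu : exists y, eproj nu (Gamma l h x) y.
Proof.
have [y0 Gy0] := ne.
set g := fun w : 'rV[R]_m => edot (w - nu) (w - nu).
set r := g y0.
set S := Gamma l h x `&` [set w | g w <= r].
have cg : continuous g by exact: cont_sqd.
have clS : closed S.
  apply: (@closedI _ (Gamma l h x) [set w | g w <= r]); first exact: Gamma_closed.
  have -> : [set w | g w <= r] = g @^-1` [set v | v <= r] by [].
  apply: (continuous_closedP g).1 cg _ _; exact: closed_le.
have bS : [bounded w | w in S].
  rewrite /bounded_near.
  near=> M => w [_ Hw] /=.
  apply: (le_trans (y := Num.sqrt r + `|nu|)); last first.
    by near: M; apply: nbhs_pinfty_ge; exact: num_real.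
  have -> : w = (w - nu) + nu by rewrite subrK.
  apply: (le_trans (ler_normD _ _)); rewrite lerD2r.
  apply: (le_trans (mxnorm_le_enorm _)); rewrite enorm_sqrtE.
  exact: ler_wsqrtr.
have cS : compact S := bounded_closed_compact bS clS.
have neS : S !=set0 by exists y0; split => //=; rewrite /r.
have [c cS' cmin] := compact_EVT_min neS cS (continuous_subspaceT cg).
move: cS'; rewrite inE => -[Gc gc].
exists c; split => // z Gz.
rewrite !enorm_sqrtE; apply: ler_wsqrtr.
have [gz|gz] := leP (g z) r.
  by apply: cmin; rewrite inE.
by apply: (le_trans gc); exact: ltW.
Unshelve. all: by end_near.
Qed.

Definition HypFin := forall x, domG l h x -> finx x /\ forall i, continuous (hr i x).

Lemma dir_ba (xb : 'rV[R]_n) (yb : 'rV[R]_m) (hF : HypFin) (hA : forall x, A1x x) (M : R) :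
  0 < M ->
  (forall (xk : nat -> 'rV[R]_n) (nuk yk : nat -> 'rV[R]_m),
      (forall k, domG l h (xk k)) ->
      xk @ \oo --> xb -> nuk @ \oo --> yb ->
      (forall k, ~ Gamma l h (xk k) (nuk k)) ->
      (forall k, eproj (nuk k) (Gamma l h (xk k)) (yk k)) ->
      \forall k \near \oo, LambdaM l h M (nuk k) (xk k) (yk k) !=set0) ->
  Rregular l h (domG l h) xb yb.
Proof.
move=> M0 HB; exists M; split => //.
set P := fun x y => ((Defs.edist y (Gamma l h x))%:E <= M%:E * resid l h x y)%E.
case: (pselect (exists U : set ('rV[R]_n * 'rV[R]_m), nbhs (xb, yb) U /\
  forall x y, U (x, y) -> domG l h x -> P x y)) => // nU; exfalso.
have Hk : forall k : nat, exists z : 'rV[R]_n * 'rV[R]_m,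
    ball (xb, yb) (k.+1%:R^-1) z /\ domG l h z.1 /\ ~ P z.1 z.2.
  move=> k; apply: contrapT => nz; apply: nU.
  exists (ball (xb, yb) (k.+1%:R^-1)); split; first exact: nbhsx_ballx.
  move=> x y Hb Hd; case: (boolP (P x y)) => // /negP nP.
  by exfalso; apply: nz; exists (x, y).
have [z Hz] := choice Hk.
set xk := fun k => (z k).1; set nuk := fun k => (z k).2.
have Hd : forall k, domG l h (xk k) by move=> k; have [_ [? _]] := Hz k.
have Hp : forall k, exists y, eproj (nuk k) (Gamma l h (xk k)) y.
  move=> k; have [fx cx] := hF _ (Hd k); exact: (proj_ex fx cx (Hd k)).
have [yk Hy] := choice Hp.
have cx : xk @ \oo --> xb.
  apply/cvg_ballP => e e0; near=> k.
  have [[Hb _] _] := Hz k; apply: (le_ball _ Hb).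
  apply: ltW; near: k; exact: (near_infty_natSinv_lt (PosNum e0)).
have cnu : nuk @ \oo --> yb.
  apply/cvg_ballP => e e0; near=> k.
  have [[_ Hb] _] := Hz k; apply: (le_ball _ Hb).
  apply: ltW; near: k; exact: (near_infty_natSinv_lt (PosNum e0)).
have nG : forall k, ~ Gamma l h (xk k) (nuk k).
  move=> k Gk; have [_ [dk nP]] := Hz k; apply: nP.
  have [fx _] := hF _ dk.
  rewrite /P resid_E // -EFinM lee_fin.
  apply: (le_trans (edist_le _ Gk)); rewrite subrr.
  have -> : enorm (0 : 'rV[R]_m) = 0.
    by rewrite /enorm big1 ?sqrtr0 // => j _; rewrite mxE expr0n.
  by apply: mulr_ge0; [exact: ltW | exact: Rres_ge0].
have := HB xk nuk yk Hd cx cnu nG Hy.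
move=> /filter_ex [k [lam Hlam]].
have [_ [dk nP]] := Hz k; apply: nP.
have [fx _] := hF _ dk.
rewrite /P resid_E // -EFinM lee_fin.
apply: (le_trans (edist_le _ (Hy k).1)).
apply: (key_ba fx (hA _) (nG k) (Hy k) Hlam).
Unshelve. all: by end_near.
Qed.

Definition Tset x y i : set R :=
  if (i < l)%N then (if hr i x y == 0 then [set v | 0 <= v] else [set v | v = 0])
  else setT.

Definition Lset x y (ka : R) : set 'rV[R]_p :=
  [set lam | (forall i, Tset x y i (lam 0 i)) /\ \sum_(i < p) `|lam 0 i| <= ka].

Definition Amap x y (lam : 'rV[R]_p) : 'rV[R]_m :=
  \sum_(i < p) lam 0 i *: grad_y h i x y.

Lemma Tset0 x y i : Tset x y i 0.
Proof. by rewrite /Tset; case: ifP => _ //; case: ifP => _ /=. Qed.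

Lemma Tset_conv x y i (a b : R) (t : R) : 0 <= t <= 1 ->
  Tset x y i a -> Tset x y i b -> Tset x y i (t * a + (1 - t) * b).
Proof.
move=> /andP [t0 t1]; rewrite /Tset; case: ifP => // _; case: ifP => _ /=.
  by move=> a0 b0; apply: addr_ge0; apply: mulr_ge0 => //; rewrite subr_ge0.
by move=> -> ->; rewrite !mulr0 addr0.
Qed.

Lemma Lset_conv x y ka (a b : 'rV[R]_p) (t : R) : 0 <= t <= 1 ->
  Lset x y ka a -> Lset x y ka b -> Lset x y ka (t *: a + (1 - t) *: b).
Proof.
move=> t01 [Ta Sa] [Tb Sb]; split.
  by move=> i; rewrite !mxE; apply: Tset_conv.
have /andP [t0 t1] := t01.
apply: (le_trans (y := t * \sum_(i < p) `|a 0 i| + (1 - t) * \sum_(i < p) `|b 0 i|)).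
  rewrite !mulr_sumr -big_split; apply: ler_sum => i _; rewrite !mxE.
  apply: (le_trans (ler_normD _ _)); rewrite !normrM (ger0_norm t0).
  have t1' : 0 <= 1 - t by rewrite subr_ge0.
  by rewrite (ger0_norm t1').
have t1' : 0 <= 1 - t by rewrite subr_ge0.
have := ler_wpM2l t0 Sa; have := ler_wpM2l t1' Sb; nra.
Qed.

Lemma Amap_conv x y (a b : 'rV[R]_p) (t : R) :
  Amap x y (t *: a + (1 - t) *: b) = t *: Amap x y a + (1 - t) *: Amap x y b.
Proof.
apply/rowP => j; rewrite /Amap !mxE !summxE mulr_sumr mulr_sumr -big_split.
by apply: eq_bigr => i _ /=; rewrite !mxE; ring.
Qed.

Lemma Amap0 x y : Amap x y 0 = 0.
Proof. by rewrite /Amap big1 // => i _; rewrite mxE scale0r. Qed.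

Lemma Amap_delta x y (c : R) i : Amap x y (c *: delta_mx 0 i) = c *: grad_y h i x y.
Proof.
rewrite /Amap (bigD1 i) //= big1 ?addr0.
  by rewrite !mxE !eqxx /= mulr1.
by move=> j ji; rewrite !mxE (negbTE ji) andbF mulr0 scale0r.
Qed.

Lemma Lset_delta x y ka (c : R) i : Tset x y i c -> `|c| <= ka ->
  Lset x y ka (c *: delta_mx 0 i).
Proof.
move=> Tc cka; split.
  move=> j; rewrite !mxE; case: (eqVneq j i) => [->|ji].
    by rewrite !eqxx /= mulr1.
  by rewrite andbF mulr0; exact: Tset0.
rewrite (bigD1 i) //= big1 ?addr0.
  by rewrite !mxE !eqxx /= mulr1.
by move=> j ji; rewrite !mxE (negbTE ji) andbF mulr0 normr0.
Qed.

Lemma Lset0 x y ka : 0 <= ka -> Lset x y ka 0.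
Proof.
move=> ka0; split; first by move=> i; rewrite mxE; exact: Tset0.
by rewrite big1 // => i _; rewrite mxE normr0.
Qed.

Lemma cont_coord q (j : 'I_q) : continuous (fun lam : 'rV[R]_q => lam 0 j).
Proof. exact: (@coord_continuous R 1 q 0 j). Qed.

Lemma Lset_compact x y ka : compact (Lset x y ka).
Proof.
have bS : [bounded lam | lam in Lset x y ka].
  rewrite /bounded_near; near=> M => lam [_ Hs] /=.
  apply: (le_trans (y := ka)); last first.
    by near: M; apply: nbhs_pinfty_ge; exact: num_real.
  have -> : `|lam| = mx_norm lam by [].
  rewrite mx_normrE; apply: bigmax_le => [|[i j] _] /=.
    by apply: le_trans Hs; apply: sumr_ge0 => i _.
  apply: le_trans Hs; rewrite (ord1 i) (bigD1 j) //= lerDl.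
  by apply: sumr_ge0 => k _.
apply: (bounded_closed_compact bS).
have -> : Lset x y ka = (\bigcap_(i in [set: 'I_p]) ((fun lam : 'rV[R]_p => lam 0 i) @^-1` Tset x y i))
    `&` ((fun lam : 'rV[R]_p => \sum_(i < p) `|lam 0 i|) @^-1` [set v | v <= ka]).
  apply/seteqP; split => lam.
    by move=> [H1 H2]; split => // i _; exact: H1.
  by move=> [H1 H2]; split => // i; exact: H1.
apply: closedI.
  apply: closed_bigI => i _.
  apply: (continuous_closedP (fun lam : 'rV[R]_p => lam 0 i)).1 (cont_coord (j:=i)) _ _.
  rewrite /Tset; case: ifP => _; last exact: closedT.
  case: ifP => _; [exact: closed_ge | exact: closed_eq].
have cs : continuous (fun lam : 'rV[R]_p => \sum_(i < p) `|lam 0 i|).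
  apply: cont_sum => i z.
  apply: (continuous_comp (f := fun lam : 'rV[R]_p => lam 0 i) (g := Num.norm)).
    exact: cont_coord.
  exact: norm_continuous.
apply: (continuous_closedP _).1 cs _ _; exact: closed_le.
Unshelve. all: by end_near.
Qed.

Lemma cont_phi x y (v : 'rV[R]_m) :
  continuous (fun lam => edot (Amap x y lam - v) (Amap x y lam - v)).
Proof.
have cj : forall j : 'I_m, continuous (fun lam => (Amap x y lam - v) 0 j).
  move=> j.
  have -> : (fun lam => (Amap x y lam - v) 0 j) =
    (fun lam => \sum_(i < p) lam 0 i * grad_y h i x y 0 j - v 0 j).
    rewrite funeqE => lam; rewrite /Amap !mxE summxE.
    rewrite (eq_bigr (fun i => lam 0 i * grad_y h i x y 0 j)) //.
    by move=> i _; rewrite [in LHS]mxE.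
  apply: cont_subc.
  apply: cont_sum => i.
  apply: cont_mulc; exact: cont_coord.
exact: cont_edot.
Qed.

Lemma key_ab x (fx : finx x) (ax : A1x x) nu y (ka r : R) :
  0 < ka -> 0 < r -> ~ Gamma l h x nu -> eproj nu (Gamma l h x) y ->
  (forall i, differentiable (hr i x) y) ->
  (forall z, `|z - y| < r -> Defs.edist z (Gamma l h x) <= ka * Rres x z) ->
  LambdaM l h ka nu x y !=set0.
Proof.
move=> ka0 r0 nG [yG ymin] dH EB.
have yn : y != nu by apply/eqP => E; apply: nG; rewrite -E.
set e := enorm (nu - y).
have e0 : 0 < e.
  rewrite lt0r enorm_ge0 andbT; apply/eqP => /enorm_eq0/eqP; rewrite subr_eq0.
  by rewrite eq_sym; exact/negP.
set v := e^-1 *: (nu - y).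
have v1 : enorm v = 1.
  by rewrite /v enormZ ger0_norm ?invr_ge0 ?(ltW e0) // mulVf ?gt_eqF.
have VI : forall w, Gamma l h x w -> edot (nu - y) (w - y) <= 0.
  apply: (near_vi yG).
    by move=> a b t t01 Ga Gb; exact: Gamma_convex.
  by move=> z Gz; apply: enorm_le; exact: ymin.
set L := Lset x y ka.
set phi := fun lam => edot (Amap x y lam - v) (Amap x y lam - v).
have L0 : L 0 by exact: Lset0 (ltW ka0).
have [ls lsL lsmin] := @compact_EVT_min _ _ phi L (ex_intro _ 0 L0) (Lset_compact (x:=x) (y:=y) (ka:=ka))
  (continuous_subspaceT (cont_phi (x:=x) (y:=y) (v:=v))).
move: lsL; rewrite inE => lsL.
set cs := Amap x y ls.
set d := v - cs.
have VIc : forall lam, L lam -> edot d (Amap x y lam) <= edot d cs.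
  move=> lam Llam.
  have := @near_vi _ _ (Amap x y @` L) v cs (ex_intro2 _ _ ls lsL erefl).
  have cvS : forall a b (t : R), 0 <= t <= 1 -> (Amap x y @` L) a -> (Amap x y @` L) b ->
      (Amap x y @` L) (t *: a + (1 - t) *: b).
    move=> a b t t01 [la La <-] [lb Lb <-].
    by exists (t *: la + (1 - t) *: lb); [exact: Lset_conv | exact: Amap_conv].
  move=> /(_ cvS) H.
  have mS : forall z, (Amap x y @` L) z -> edot (cs - v) (cs - v) <= edot (z - v) (z - v).
    by move=> z [lz Lz <-]; apply: lsmin; rewrite inE.
  have := H mS (Amap x y lam) (ex_intro2 _ _ lam Llam erefl).
  by rewrite edotBr -/d; lra.
have dz : d = 0.
  apply: edot_eq0; apply/eqP; rewrite eq_le edot_ge0 andbT leNgt; apply/negP => dpos.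
  set D := edot d cs; set del := edot d d.
  have D0 : 0 <= D by have := VIc 0 L0; rewrite Amap0 edot0r.
  have Hc : forall i, (i < l)%N -> hr i x y = 0 -> ka * 'd (hr i x) y d <= D.
    move=> i il h0.
    have Ld : L (ka *: delta_mx 0 i).
      apply: Lset_delta; last by rewrite ger0_norm // ltW.
      by rewrite /Tset il h0 eqxx /=; exact: ltW.
    by have := VIc _ Ld; rewrite Amap_delta edotZr edotC grad_dotE.
  have HcJ : forall i, (l <= i)%N -> ka * `|'d (hr i x) y d| <= D.
    move=> i li.
    have TT : forall c, Tset x y i c by move=> c; rewrite /Tset ltnNge li.
    have L1 : L (ka *: delta_mx 0 i).
      by apply: Lset_delta => //; rewrite ger0_norm // ltW.
    have L2 : L ((- ka) *: delta_mx 0 i).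
      by apply: Lset_delta => //; rewrite normrN ger0_norm // ltW.
    have := VIc _ L1; have := VIc _ L2.
    rewrite !Amap_delta !edotZr ![edot d (grad_y _ _ _ _)]edotC !grad_dotE -/D.
    case: (lerP 0 ('d (hr i x) y d)) => c0.
      by rewrite ger0_norm //; nra.
    by rewrite ltr0_norm //; nra.
  set eps := del / (2 * ka).
  have eps0 : 0 < eps by rewrite /eps divr_gt0 // mulr_gt0.
  have Hnear : \forall t \near 0^'+, 0 < t /\ `|t *: d| < r /\
      forall i, piece i x (y + t *: d) <= t * (D / ka + eps).
    near=> t.
    have t0 : 0 < t by near: t; exact: nbhs_right_gt.
    split => //; split.
      have tb : t < r / (`|d| + 1).
        by near: t; apply: nbhs_right_lt; rewrite divr_gt0 // ltr_wpDl.
      rewrite normrZ gtr0_norm //.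
      move: tb; rewrite ltr_pdivlMr ?ltr_wpDl // => tb.
      have := normr_ge0 d; nra.
    near: t; apply: filter_forall => i.
    set c := 'd (hr i x) y d.
    have [il|li] := ltnP i l.
    - have [h0|hn] := eqVneq (hr i x y) 0.
        have cle : c <= D / ka by rewrite ler_pdivlMr // mulrC; exact: Hc.
        have U := upper_near (c := c + eps) (dH i) (ltac:(lra) : c < c + eps).
        near=> t.
        have t0 : 0 < t by near: t; exact: nbhs_right_gt.
        have Ht : hr i x (y + t *: d) <= hr i x y + t * (c + eps) by near: t; exact: U.
        rewrite /piece il; apply: (le_trans Ht); rewrite h0 add0r.
        by apply: ler_wpM2l; [exact: ltW | rewrite lerD2r].
      have hneg : hr i x y < 0.
        have [H1 _] := (GammaE fx y).1 yG.
        by rewrite lt_neqAle hn H1.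
      have U := upper_near (c := c + 1) (dH i) (ltac:(lra) : c < c + 1).
      set b := - hr i x y / (`|c + 1| + 1).
      have b0 : 0 < b by rewrite /b divr_gt0 ?oppr_gt0 // ltr_wpDl.
      near=> t.
      have t0 : 0 < t by near: t; exact: nbhs_right_gt.
      have tb : t < b by near: t; exact: nbhs_right_lt.
      have Ht : hr i x (y + t *: d) <= hr i x y + t * (c + 1) by near: t; exact: U.
      rewrite /piece il; apply: (le_trans Ht).
      have RHS0 : 0 <= t * (D / ka + eps).
        by apply: mulr_ge0; [exact: ltW | apply: addr_ge0; [apply: divr_ge0 => //; exact: ltW | exact: ltW]].
      apply: le_trans RHS0.
      move: tb; rewrite /b ltr_pdivlMr ?ltr_wpDl // => tb.
      have := ler_norm (c + 1); have := normr_ge0 (c + 1); nra.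
    - have h0 : hr i x y = 0 by have [_ H2] := (GammaE fx y).1 yG; exact: H2.
      have cle : `|c| <= D / ka by rewrite ler_pdivlMr // mulrC; exact: HcJ.
      have U := upper_near (c := c + eps) (dH i) (ltac:(lra) : c < c + eps).
      have Lo := lower_near (c := c - eps) (dH i) (ltac:(lra) : c - eps < c).
      near=> t.
      have t0 : 0 < t by near: t; exact: nbhs_right_gt.
      have Ht : hr i x (y + t *: d) <= hr i x y + t * (c + eps) by near: t; exact: U.
      have Ht2 : hr i x y + t * (c - eps) <= hr i x (y + t *: d) by near: t; exact: Lo.
      rewrite /piece ltnNge li /=; rewrite h0 add0r in Ht Ht2.
      have cle1 : c <= D / ka by apply: le_trans cle; exact: ler_norm.
      have cle2 : - c <= D / ka by apply: le_trans cle; rewrite -normrN; exact: ler_norm.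
      rewrite ler_norml; apply/andP; split; nra.
  have [t [t0 [tr Hp]]] := filter_ex Hnear.
  set z := y + t *: d.
  have RHS0 : 0 <= t * (D / ka + eps).
    by apply: mulr_ge0; [exact: ltW | apply: addr_ge0; [apply: divr_ge0 => //; exact: ltW | exact: ltW]].
  have Rz : Rres x z <= t * (D / ka + eps) by apply: Rres_le.
  have zy : `|z - y| < r by rewrite /z (addrC y) addrK.
  have Ez := EB z zy.
  have vd : edot v d = del + D.
    by rewrite edotC -/del /D -edotDr /d subrK.
  have Lb : t * edot v d <= Defs.edist z (Gamma l h x).
    apply: edist_ge; first by exists y.
    move=> w Gw; rewrite enormB.
    apply: le_trans (edot_unit_le _ v1).
    have -> : z - w = t *: d + (y - w) by rewrite /z addrAC addrC.
    rewrite [X in _ <= X]edotDr [X in _ <= X + _]edotZr lerDl /v edotZl.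
    apply: mulr_ge0; first by rewrite invr_ge0 ltW.
    by rewrite -[y - w]opprB edotNr oppr_ge0; exact: VI.
  have : t * (del + D) <= ka * (t * (D / ka + eps)).
    rewrite -vd; apply: (le_trans Lb); apply: (le_trans Ez).
    by apply: ler_wpM2l; [exact: ltW | exact: Rz].
  have -> : ka * (t * (D / ka + eps)) = t * (D + del / 2).
    by rewrite /eps; field; rewrite gt_eqF.
  rewrite !mulrDr [t * D + _]addrC lerD2r => H.
  have : t * (del / 2) < t * del.
    by rewrite ltr_pM2l // ltr_pdivrMr // ltr_pMr // ltr1n.
  by rewrite ltNge H.
have vcs : v = cs by apply/eqP; rewrite -subr_eq0 -/d dz.
exists ls; split; last exact: lsL.2.
split.
  change ((enorm (y - nu))^-1 *: (y - nu) + Amap x y ls = 0).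
  by rewrite enormB -/e -/cs -vcs /v -scalerDr addrA subrK subrr scaler0.
move=> i il; have := lsL.1 i; rewrite /Tset il.
case: eqP => [h0|hn] /= T.
  by split => //; rewrite hrE // h0 mule0.
by rewrite T; split => //; rewrite mul0e.
Unshelve. all: by end_near.
Qed.

Lemma hr_cvg (xb : 'rV[R]_n) (yb : 'rV[R]_m) (fxb : finx xb) i
  (xk : nat -> 'rV[R]_n) (nuk : nat -> 'rV[R]_m) :
  {for (xb, yb), continuous (fun w : 'rV[R]_n * 'rV[R]_m => h i w.1 w.2)} ->
  xk @ \oo --> xb -> nuk @ \oo --> yb ->
  (fun k => hr i (xk k) (nuk k)) @ \oo --> hr i xb yb.
Proof.
move=> ch cx cnu.
have cp : (fun k => (xk k, nuk k)) @ \oo --> (xb, yb).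
  exact: (@cvg_pair _ _ _ _ (nbhs xb) (nbhs yb) _ _ _ xk nuk cx cnu).
have := cvg_comp _ _ cp ch; rewrite /= hrE // => H.
exact: (fine_cvg H).
Qed.

Lemma dir_ab (xb : 'rV[R]_n) (yb : 'rV[R]_m) (hF : HypFin) (hA : forall x, A1x x)
  (hxb : domG l h xb) (hyb : Gamma l h xb yb)
  (W : set ('rV[R]_n * 'rV[R]_m)) (oW : open W) (Wb : W (xb, yb))
  (Wc : forall i, {for (xb, yb), continuous (fun w : 'rV[R]_n * 'rV[R]_m => h i w.1 w.2)})
  (Wd : forall i (z : 'rV[R]_n * 'rV[R]_m), W z -> differentiable (fun y => fine (h i z.1 y)) z.2) :
  Rregular l h (domG l h) xb yb ->
  exists M : R, 0 < M /\
    forall (xk : nat -> 'rV[R]_n) (nuk yk : nat -> 'rV[R]_m),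
      (forall k, domG l h (xk k)) ->
      xk @ \oo --> xb -> nuk @ \oo --> yb ->
      (forall k, ~ Gamma l h (xk k) (nuk k)) ->
      (forall k, eproj (nuk k) (Gamma l h (xk k)) (yk k)) ->
      \forall k \near \oo, LambdaM l h M (nuk k) (xk k) (yk k) !=set0.
Proof.
move=> [ka [ka0 [U [nU HU]]]]; exists ka; split => //.
move=> xk nuk yk Hd cx cnu nG Hy.
have [fxb _] := hF _ hxb.
have /nbhs_ballP [e1 e10 Ue] := nU.
have /nbhs_ballP [e2 e20 We] : nbhs (xb, yb) W by apply: open_nbhs_nbhs.
set eps := Num.min e1 e2.
have eps0 : 0 < eps by rewrite lt_min e10 e20.
have epse1 : eps <= e1 by rewrite ge_min lexx.
have epse2 : eps <= e2 by rewrite ge_min lexx orbT.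
set del := eps / (8 * ka).
have del0 : 0 < del by rewrite divr_gt0 // mulr_gt0.
have Rk : \forall k \near \oo, Rres (xk k) (nuk k) <= del.
  have Hp : \forall k \near \oo, forall i, piece i (xk k) (nuk k) <= del.
    apply: filter_forall => i.
    have ci := hr_cvg fxb (Wc i) cx cnu.
    have [H1 H2] := (GammaE fxb yb).1 hyb.
    have [il|li] := ltnP i l.
      have lt : hr i xb yb < del by apply: le_lt_trans (H1 i il) del0.
      near=> k; rewrite /piece il; apply: ltW.
      by near: k; exact: (cvgr_lt _ ci _ lt).
    have lt1 : hr i xb yb < del by rewrite (H2 i li).
    have lt2 : - del < hr i xb yb by rewrite (H2 i li) oppr_lt0.
    near=> k; rewrite /piece ltnNge li /=; rewrite ler_norml; apply/andP; split.
      by apply: ltW; near: k; exact: (cvgr_gt _ ci _ lt2).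
    by apply: ltW; near: k; exact: (cvgr_lt _ ci _ lt1).
  near=> k; apply: Rres_le; first exact: ltW.
  by near: k; exact: Hp.
have e4 : 0 < eps / 4 by rewrite divr_gt0.
have Bx : \forall k \near \oo, `|xb - xk k| < eps / 4.
  by move/cvgrPdist_lt: cx => /(_ _ e4).
have Bn : \forall k \near \oo, `|yb - nuk k| < eps / 4.
  by move/cvgrPdist_lt: cnu => /(_ _ e4).
near=> k.
have bx : `|xb - xk k| < eps / 4 by near: k; exact: Bx.
have bn : `|yb - nuk k| < eps / 4 by near: k; exact: Bn.
have Rkk : Rres (xk k) (nuk k) <= del by near: k; exact: Rk.
have [fxk cxk] := hF _ (Hd k).
have [yG ymin] := Hy k.
have inU : forall z, `|xb - xk k| < e1 -> `|yb - z| < e1 ->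
    Defs.edist z (Gamma l h (xk k)) <= ka * Rres (xk k) z.
  move=> z H1 H2.
  have Uz : U (xk k, z).
    by apply: Ue; split; rewrite /= -ball_normE /ball_ /=.
  by have := HU _ _ Uz (Hd k); rewrite resid_E // -EFinM lee_fin.
have dyn : enorm (yk k - nuk k) <= ka * del.
  apply: le_trans (ler_wpM2l (ltW ka0) Rkk).
  have e4e1 : eps / 4 <= e1 by apply: le_trans epse1; rewrite ler_pdivrMr //; lra.
  apply: le_trans (inU _ (lt_le_trans bx e4e1) (lt_le_trans bn e4e1)).
  by apply: edist_ge; [exists (yk k) | exact: ymin].
have kadel : ka * del = eps / 8 by rewrite /del; field; rewrite gt_eqF.
have byk : `|yb - yk k| < eps / 2.
  have -> : yb - yk k = (yb - nuk k) + (nuk k - yk k) by rewrite addrA subrK.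
  apply: le_lt_trans (ler_normD _ _) _.
  have : `|nuk k - yk k| <= eps / 8.
    rewrite -kadel; apply: le_trans dyn; rewrite enormB; exact: mxnorm_le_enorm.
  move: bn; lra.
have e2p : 0 < eps / 2 by rewrite divr_gt0.
apply: (key_ab fxk (hA _) ka0 e2p (nG k) (Hy k)).
- move=> i; have := Wd i (xk k, yk k); apply.
  by apply: We; split; rewrite /= -ball_normE /ball_ /=; lra.
- move=> z Hz; apply: inU; first by lra.
  have -> : yb - z = (yb - yk k) + (yk k - z) by rewrite addrA subrK.
  apply: le_lt_trans (ler_normD _ _) _.
  rewrite -normrN opprB in Hz; lra.
Unshelve. all: by end_near.
Qed.
End Main.

Theorem theorem3p2 (R : realType) (n m p l : nat)
  (h : 'I_p -> 'rV[R]_n -> 'rV[R]_m -> \bar R)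
  (xb : 'rV[R]_n) (yb : 'rV[R]_m)
  (hlp : (l <= p)%N)
  (hxb : domG l h xb)
  (hyb : Gamma l h xb yb)
  (* continuity and continuous differentiability w.r.t. y near {xb} x Gamma(xb) *)
  (hW : exists W : set ('rV[R]_n * 'rV[R]_m),
      open W /\ (forall y, Gamma l h xb y -> W (xb, y)) /\
      forall i : 'I_p,
        (forall z, W z -> h i z.1 z.2 \is a fin_num) /\
        (forall z, W z -> {for z, continuous (fun w => h i w.1 w.2)}) /\
        (forall z, W z -> differentiable (fun y => fine (h i z.1 y)) z.2) /\
        (forall z, W z -> {for z, continuous (fun w => grad_y h i w.1 w.2)}))
  (* h_i(x, .) : R^m -> R continuous for x in dom Gamma *)
  (hfin : forall x, domG l h x -> forall i : 'I_p,
      (forall y, h i x y \is a fin_num) /\ continuous (fun y => fine (h i x y)))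
  (* (A1) *)
  (hA1 : forall x (i : 'I_p),
      ((i < l)%N -> econvex (h i x)) /\ ((l <= i)%N -> eaffine (h i x)))
  (* (A2) *)
  (hA2 : loc_bounded l h xb) :
  Rregular l h (domG l h) xb yb <->
  exists M : R, 0 < M /\
    forall (xk : nat -> 'rV[R]_n) (nuk yk : nat -> 'rV[R]_m),
      (forall k, domG l h (xk k)) ->
      xk @ \oo --> xb -> nuk @ \oo --> yb ->
      (forall k, ~ Gamma l h (xk k) (nuk k)) ->
      (forall k, eproj (nuk k) (Gamma l h (xk k)) (yk k)) ->
      \forall k \near \oo, LambdaM l h M (nuk k) (xk k) (yk k) !=set0.
Proof.
have hF : HypFin l h.
  move=> x dx; have H := hfin x dx; split.
    by move=> i y; exact: (H i).1.
  by move=> i; exact: (H i).2.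
have hA : forall x, A1x l h x by move=> x; exact: hA1.
have [W [oW [GW HWi]]] := hW.
have Wb : W (xb, yb) := GW yb hyb.
have Wc : forall i, {for (xb, yb), continuous (fun w : 'rV[R]_n * 'rV[R]_m => h i w.1 w.2)}.
  by move=> i; have [_ [H _]] := HWi i; exact: H.
have Wd : forall i (z : 'rV[R]_n * 'rV[R]_m), W z ->
    differentiable (fun y => fine (h i z.1 y)) z.2.
  by move=> i z Wz; have [_ [_ [H _]]] := HWi i; exact: H.
split.
  exact: (dir_ab hF hA hxb hyb oW Wb Wc Wd).
by move=> [M [M0 HB]]; exact: (dir_ba hF hA M0 HB).
Qed.
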